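(* The three-qubit Fredkin gate $F_3=|0\rangle\langle0|\otimes I_2\otimes I_2+|1\rangle\langle1|\otimes \mathrm{SWAP}$, where $\mathrm{SWAP}|b,c\rangle=|c,b\rangle$ for $b,c\in\{0,1\}$, has $\mathrm{sr}(F_3)=4$.
   Context: $I_2$ is the $2\times 2$ identity; $\{|0\rangle,|1\rangle\}$ is the standard basis of $\mathbb{C}^2$. For a matrix $U$ on $\mathbb{C}^2\otimes\mathbb{C}^2\otimes\mathbb{C}^2$ (systems $A,B,C$), its Schmidt rank $\mathrm{sr}(U)$ is the least integer $r$ such that $U=\sum_{j=1}^r A_j\otimes B_j\otimes C_j$ with $A_j,B_j,C_j$ complex $2\times 2$ matrices (i.e. the tensor rank of $U$). *)

(* Defs.v *)
From HB Require Import structures.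
From mathcomp Require Import all_boot all_algebra.
From mathcomp Require Import reals.
From mathcomp Require Import complex mxtens.
Set Implicit Arguments. Unset Strict Implicit. Unset Printing Implicit Defensive.
Import GRing.Theory Num.Theory.
Local Open Scope ring_scope.

(* Tensor product A ⊗ B is mxtens's [A *t B] (Kronecker product, first factor
   most significant), so C^2 ⊗ C^2 ⊗ C^2 matrices have type 'M_(2 * (2 * 2)). *)

Definition op3 (R : realType) := 'M[R[i]]_(2 * (2 * 2)).

Definition sr_decomposable (R : realType) (U : op3 R) (r : nat) : Prop :=
  exists (A B C : 'I_r -> 'M[R[i]]_2),
    U = \sum_(j < r) (A j *t (B j *t C j)).

Definition schmidt_rank_is (R : realType) (U : op3 R) (r : nat) : Prop :=
  sr_decomposable U r /\ forall r', sr_decomposable U r' -> (r <= r')%N.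

Definition ketbra (R : realType) (i j : 'I_2) : 'M[R[i]]_2 := delta_mx i j.

(* SWAP = sum_{b,c} |c,b><b,c| = sum_{b,c} |c><b| ⊗ |b><c| *)
Definition SWAP (R : realType) : 'M[R[i]]_(2 * 2) :=
  \sum_(b < 2) \sum_(c < 2) (ketbra R c b *t ketbra R b c).

Definition Fredkin (R : realType) : op3 R :=
  ketbra R 0 0 *t ((1%:M : 'M[R[i]]_2) *t (1%:M : 'M[R[i]]_2))
  + ketbra R 1 1 *t SWAP R.

(* Main.v *)
Require Import Defs.
From mathcomp Require Import all_boot all_algebra.
From mathcomp Require Import reals.
From mathcomp Require Import complex mxtens.
From mathcomp Require Import ring.
Set Implicit Arguments. Unset Strict Implicit. Unset Printing Implicit Defensive.
Import GRing.Theory Num.Theory.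
Local Open Scope ring_scope.

Section S.
Variable R : realType.
Local Notation C := (R[i]).

Definition idx3 (a b c : 'I_2) : 'I_(2 * (2 * 2)) := mxtens_index (a, mxtens_index (b, c)).

Lemma ord2 (x : 'I_2) : x = 0 \/ x = 1.
Proof. case: x => m H; case: m H => [|[|n]] H; [left|right|by []]; exact: val_inj. Qed.

Lemma big2 (F : 'I_2 -> C) : \sum_(i < 2) F i = F 0 + F 1.
Proof. by rewrite big_ord_recl big_ord1; congr (F _ + F _); apply: val_inj. Qed.

Lemma tens3E (A B D : 'M[C]_2) a b c a' b' c' :
  (A *t (B *t D)) (idx3 a b c) (idx3 a' b' c') = A a a' * (B b b' * D c c').
Proof. by rewrite /idx3 !tensmxE. Qed.

Lemma FredE a b c a' b' c' : Fredkin R (idx3 a b c) (idx3 a' b' c') =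
  ((a==0)&&(a'==0)&&(b==b')&&(c==c'))%:R + ((a==1)&&(a'==1)&&(b==c')&&(c==b'))%:R.
Proof.
rewrite /Fredkin mxE !tens3E /SWAP /idx3 tensmxE summxE !big2 !summxE !big2 /=.
rewrite !tensmxE /ketbra !mxE.
by case: (ord2 a) => ->; case: (ord2 b) => ->; case: (ord2 c) => ->;
   case: (ord2 a') => ->; case: (ord2 b') => ->; case: (ord2 c') => ->;
   rewrite /= ?(mulr0, mul0r, mulr1, mul1r, addr0, add0r).
Qed.

Lemma sum3E r (A B D : 'I_r -> 'M[C]_2) a b c a' b' c' :
  (\sum_(j < r) A j *t (B j *t D j)) (idx3 a b c) (idx3 a' b' c') =
  \sum_(j < r) A j a a' * (B j b b' * D j c c').
Proof. by rewrite summxE; apply: eq_bigr => j _; rewrite tens3E. Qed.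

Definition mx2 (p q r s : C) : 'M[C]_2 :=
  \matrix_(i < 2, j < 2) if i == 0 then (if j == 0 then p else q)
                         else (if j == 0 then r else s).

Definition Adec : 'I_4 -> 'M[C]_2 := fun j =>
  nth 0 [:: mx2 1 0 0 (2^-1); mx2 0 0 0 (2^-1); mx2 0 0 0 (2^-1); mx2 0 0 0 (2^-1)] j.
Definition Bdec : 'I_4 -> 'M[C]_2 := fun j =>
  nth 0 [:: mx2 1 0 0 1; mx2 0 1 1 0; mx2 0 1 (-1) 0; mx2 1 0 0 (-1)] j.
Definition Ddec : 'I_4 -> 'M[C]_2 := fun j =>
  nth 0 [:: mx2 1 0 0 1; mx2 0 1 1 0; mx2 0 (-1) 1 0; mx2 1 0 0 (-1)] j.

Lemma two_neq0 : (2 : C) != 0.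
Proof. by rewrite pnatr_eq0. Qed.

Lemma decomp : Fredkin R = \sum_(j < 4) (Adec j *t (Bdec j *t Ddec j)).
Proof.
apply/matrixP => i k.
case: (mxtens_indexP i) => a bc; case: (mxtens_indexP bc) => b c.
case: (mxtens_indexP k) => a' bc'; case: (mxtens_indexP bc') => b' c'.
rewrite -[mxtens_index (a, _)]/(idx3 a b c) -[mxtens_index (a', _)]/(idx3 a' b' c').
rewrite FredE sum3E !big_ord_recl big_ord0 /Adec /Bdec /Ddec /= !mxE.
have h2 := two_neq0.
by case: (ord2 a) => ->; case: (ord2 b) => ->; case: (ord2 c) => ->;
   case: (ord2 a') => ->; case: (ord2 b') => ->; case: (ord2 c') => ->;
   rewrite /=; field.
Qed.

Definition phi (k : 'I_(2*2)) (G : 'I_2 -> 'I_2 -> 'I_2 -> 'I_2 -> C) : C :=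
  if (mxtens_unindex k).1 == 0 then
    (if (mxtens_unindex k).2 == 0 then G 1 1 0 0 else G 1 1 1 0)
  else (if (mxtens_unindex k).2 == 0 then G 1 1 0 1 else G 0 0 0 0 - G 1 1 0 0).

Lemma phi_lin r k (G : 'I_r -> 'I_2 -> 'I_2 -> 'I_2 -> 'I_2 -> C) (y : 'I_r -> C) :
  phi k (fun a a' c c' => \sum_(j < r) G j a a' c c' * y j) =
  \sum_(j < r) phi k (G j) * y j.
Proof.
rewrite /phi; case: ifP => _; case: ifP => _ //.
by rewrite -sumrB; apply: eq_bigr => j _; rewrite mulrBl.
Qed.

Lemma phi_ext k G H : (forall a a' c c', G a a' c c' = H a a' c c') ->
  phi k G = phi k H.
Proof. by move=> e; rewrite /phi !e. Qed.

Lemma lower r (A B D : 'I_r -> 'M[C]_2) :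
  Fredkin R = \sum_(j < r) (A j *t (B j *t D j)) -> (4 <= r)%N.
Proof.
move=> HF.
pose M : 'M[C]_(2*2) := \matrix_(k, l) phi k (fun a a' c c' =>
   Fredkin R (idx3 a (mxtens_unindex l).1 c) (idx3 a' (mxtens_unindex l).2 c')).
pose K : 'M[C]_(2*2, r) := \matrix_(k, j) phi k (fun a a' c c' => A j a a' * D j c c').
pose Bm : 'M[C]_(r, 2*2) := \matrix_(j, l) B j (mxtens_unindex l).1 (mxtens_unindex l).2.
have M1 : M = 1%:M.
  apply/matrixP => k l; rewrite !mxE.
  case: (mxtens_indexP k) => p q; case: (mxtens_indexP l) => b b'.
  rewrite /phi !mxtens_indexK /= !FredE.
  case: (ord2 p) => ->; case: (ord2 q) => ->; case: (ord2 b) => ->;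
     case: (ord2 b') => ->; rewrite /= ?(add0r, addr0) ?subrr ?subr0 ?oppr0 //.
have MKB : M = K *m Bm.
  apply/matrixP => k l; rewrite !mxE.
  rewrite HF (@phi_ext _ _ (fun a a' c c' => \sum_(j < r)
      (A j a a' * D j c c') * B j (mxtens_unindex l).1 (mxtens_unindex l).2)).
    by rewrite phi_lin; apply: eq_bigr => j _; rewrite !mxE.
  by move=> a a' c c'; rewrite sum3E; apply: eq_bigr => j _; ring.
have : (\rank (1%:M : 'M[C]_(2*2)) <= r)%N.
  by rewrite -M1 MKB (leq_trans (mxrankM_maxl _ _)) // rank_leq_col.
by rewrite mxrank1.
Qed.
End S.

Theorem mainTheorem11 (R : realType) : schmidt_rank_is (Fredkin R) 4.
Proof.
split.
  by exists (@Adec R), (@Bdec R), (@Ddec R); exact: decomp.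
by move=> r' [A [B [D H]]]; exact: (lower H).
Qed.
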